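(* Let $\mathbb{X}$ be a nonempty finite set of points in $\mathbb{P}^1\times\mathbb{P}^1$ and let $\mathcal{G}(I_{\mathbb{X}})=\{g_1,\dots,g_r\}$ be a minimal set of bihomogeneous generators of $I_{\mathbb{X}}$. Then there is no partition $\mathcal{G}(I_{\mathbb{X}})=A\sqcup B$ with $A\neq\emptyset$ and $B\neq\emptyset$ such that both $J=\langle A\rangle$ and $K=\langle B\rangle$ are defining ideals of (finite) sets of points in $\mathbb{P}^1\times\mathbb{P}^1$.
   Context: $R=\mathbb{C}[x_0,x_1,y_0,y_1]$ is bigraded with $\deg x_i=(1,0)$, $\deg y_i=(0,1)$. For a point $P=A\times B$ with $A=[a_0:a_1]$, $B=[b_0:b_1]$, $I_P=\langle a_1x_0-a_0x_1,\ b_1y_0-b_0y_1\rangle$; for a finite set $\mathbb{X}$ of points, $I_{\mathbb{X}}=\bigcap_{P\in\mathbb{X}}I_P$ (the defining ideal of $\mathbb{X}$). *)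

(* Defs.v *)
From HB Require Import structures.
From mathcomp Require Import all_boot all_order all_algebra.
From mathcomp Require Import reals.
From mathcomp Require Import complex.
From mathcomp Require Import mpoly.

Set Implicit Arguments.
Unset Strict Implicit.
Unset Printing Implicit Defensive.

Import Order.TTheory GRing.Theory Num.Theory.
Local Open Scope ring_scope.
Local Open Scope complex_scope.

(* The ring R = C[x0,x1,y0,y1]: variables 'X_0 = x0, 'X_1 = x1, 'X_2 = y0, 'X_3 = y1,
   with C = R[i] the complex numbers built over a model R of the reals. *)
Definition Cpoly (R : realType) := {mpoly R[i][4]}.

Definition v0 : 'I_4 := @Ordinal 4 0 isT.
Definition v1 : 'I_4 := @Ordinal 4 1 isT.
Definition v2 : 'I_4 := @Ordinal 4 2 isT.
Definition v3 : 'I_4 := @Ordinal 4 3 isT.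

Definition bihomogeneous (R : realType) (p : Cpoly R) : Prop :=
  exists d1 d2 : nat, forall m, m \in msupp p ->
    (m v0 + m v1 = d1)%N /\ (m v2 + m v3 = d2)%N.

Definition ideal_of (R : realType) := Cpoly R -> Prop.

Definition gen_ideal (R : realType) (I : finType) (P : pred I) (g : I -> Cpoly R)
  : ideal_of R :=
  fun p => exists c : I -> Cpoly R, p = \sum_(i | P i) c i * g i.

(* A point A x B of P^1 x P^1, given by representatives ((a0,a1),(b0,b1)),
   both nonzero. *)
Definition point (R : realType) := ((R[i] * R[i]) * (R[i] * R[i]))%type.

Definition valid_point (R : realType) (P : point R) : Prop :=
  P.1 != (0, 0) /\ P.2 != (0, 0).

Definition point_gens (R : realType) (P : point R) (k : 'I_2) : Cpoly R :=
  if k == ord0 then P.1.2 *: 'X_v0 - P.1.1 *: 'X_v1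
  else P.2.2 *: 'X_v2 - P.2.1 *: 'X_v3.

Definition point_ideal (R : realType) (P : point R) : ideal_of R :=
  gen_ideal predT (point_gens P).

(* I_X = intersection of I_P over P in X; X a finite set of points given by a
   list of representatives (repetitions are harmless). *)
Definition points_ideal (R : realType) (X : seq (point R)) : ideal_of R :=
  fun p => forall P, P \in X -> point_ideal P p.

Definition same_ideal (R : realType) (I J : ideal_of R) : Prop :=
  forall p, I p <-> J p.

Definition is_points_ideal (R : realType) (J : ideal_of R) : Prop :=
  exists X : seq (point R), (forall P, P \in X -> valid_point P) /\
    same_ideal J (points_ideal X).

Definition minimal_bihom_gens (R : realType) (r : nat) (g : 'I_r -> Cpoly R)
  (I : ideal_of R) : Prop :=
  (forall i, bihomogeneous (g i)) /\
  same_ideal (gen_ideal predT g) I /\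
  (forall i : 'I_r, ~ gen_ideal (fun j => j != i) g (g i)).

(* Main.v *)
Require Import Defs.
From HB Require Import structures.
From mathcomp Require Import all_boot all_order all_algebra.
From mathcomp Require Import reals complex mpoly.
Set Implicit Arguments.
Unset Strict Implicit.
Unset Printing Implicit Defensive.
Import Order.TTheory GRing.Theory Num.Theory.
Local Open Scope ring_scope.

Section S.
Variable R : realType.
Local Notation C := (R[i]).
Local Notation M := (Cpoly R).

Definition dv (D x : M) := exists q, x = D * q.
Definition cong (D a b : M) := dv D (a - b).

Lemma cong_refl D a : cong D a a.
Proof. by exists 0; rewrite subrr mulr0. Qed.

Lemma cong_add D a b c d : cong D a b -> cong D c d -> cong D (a + c) (b + d).
Proof. move=> [q1 e1] [q2 e2]; exists (q1 + q2).
by rewrite mulrDr -e1 -e2 opprD addrACA. Qed.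

Lemma cong_mul D a b c d : cong D a b -> cong D c d -> cong D (a * c) (b * d).
Proof. move=> [q1 e1] [q2 e2]; exists (a * q2 + q1 * d).
have -> : a * c - b * d = a * (c - d) + (a - b) * d.
  by rewrite mulrBr mulrBl addrA subrK.
by rewrite e1 e2 mulrDr mulrCA -mulrA. Qed.

Lemma cong_scale D k a b : cong D a b -> cong D (k *: a) (k *: b).
Proof. move=> [q e]; exists (k *: q). rewrite -scalerBr e. by rewrite scalerAr. Qed.

Lemma cong_exp D a b n : cong D a b -> cong D (a ^+ n) (b ^+ n).
Proof. move=> h; elim: n => [|n IH]; first exact: cong_refl.
by rewrite !exprS; apply: cong_mul. Qed.

Definition cmp (h : 'I_4 -> M) (p : M) : M := p \mPo [tuple h i | i < 4].

Lemma cmpX h m : cmp h 'X_[m] = \prod_(i < 4) h i ^+ m i.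
Proof. rewrite /cmp comp_mpolyX; apply: eq_bigr => i _; by rewrite tnth_mktuple. Qed.

Lemma cmpXU h i : cmp h 'X_i = h i.
Proof. by rewrite /cmp comp_mpolyXU -tnth_nth tnth_mktuple. Qed.

Lemma cong_cmp D h : (forall i, cong D (h i) 'X_i) -> forall p, cong D (cmp h p) p.
Proof.
move=> hh p; rewrite {2}[p]mpolyE /cmp comp_mpolyEX.
apply: (big_ind2 (cong D)); first exact: cong_refl.
  by move=> ????; apply: cong_add.
move=> m _; apply: cong_scale; rewrite -/(cmp h _) cmpX mpolyXE_id.
apply: (big_ind2 (cong D)); first exact: cong_refl.
  by move=> ????; apply: cong_mul.
by move=> i _; apply: cong_exp.
Qed.


Lemma cmpB h p q : cmp h (p - q) = cmp h p - cmp h q.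
Proof. by rewrite /cmp comp_mpolyB. Qed.
Lemma cmpD h p q : cmp h (p + q) = cmp h p + cmp h q.
Proof. by rewrite /cmp comp_mpolyD. Qed.
Lemma cmpZ h c p : cmp h (c *: p) = c *: cmp h p.
Proof. by rewrite /cmp comp_mpolyZ. Qed.
Lemma cmpM h p q : cmp h (p * q) = cmp h p * cmp h q.
Proof. by rewrite /cmp rmorphM. Qed.
Lemma cmp1 h : cmp h 1 = 1.
Proof. by rewrite /cmp rmorph1. Qed.
Lemma cmp0 h : cmp h 0 = 0.
Proof. by rewrite /cmp raddf0. Qed.
Lemma cmpC h c : cmp h c%:MP = c%:MP.
Proof. by rewrite /cmp comp_mpolyC. Qed.
Lemma cmp_sum h (I : Type) (r : seq I) (P : pred I) (F : I -> M) :
  cmp h (\sum_(i <- r | P i) F i) = \sum_(i <- r | P i) cmp h (F i).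
Proof. by rewrite /cmp raddf_sum. Qed.
Lemma cmp_prod h (I : Type) (r : seq I) (P : pred I) (F : I -> M) :
  cmp h (\prod_(i <- r | P i) F i) = \prod_(i <- r | P i) cmp h (F i).
Proof. by rewrite /cmp rmorph_prod. Qed.

Lemma cmp_is_rmorph h : (cmp h (1) = 1) /\ (forall p q, cmp h (p * q) = cmp h p * cmp h q).
Proof. split; [exact: rmorph1 | move=> p q; exact: rmorphM]. Qed.


Definition wt (s t : C) (m : 'X_{1..4}) : C :=
  \prod_(i < 4) (if (val i < 2)%N then s else t) ^+ m i.

Definition sc (s t : C) := cmp (fun i => (if (val i < 2)%N then s else t) *: 'X_i).

Lemma scE s t p : sc s t p = \sum_(m <- msupp p) (p@_m * wt s t m) *: 'X_[m].
Proof.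
rewrite /sc /cmp comp_mpolyEX; apply: eq_bigr => m _.
rewrite -/(cmp _ _) cmpX -scalerA; congr (_ *: _).
rewrite (eq_bigr (fun i => (if (val i < 2)%N then s else t) ^+ m i *: 'X_i ^+ m i)).
  by rewrite scaler_prod -mpolyXE_id.
by move=> i _; rewrite exprZn.
Qed.

Lemma sc_coef s t p mu : (sc s t p)@_mu = p@_mu * wt s t mu.
Proof.
rewrite scE raddf_sum /=.
rewrite (eq_bigr (fun m => (p@_m * wt s t m) * (m == mu)%:R)); last first.
  by move=> m _; rewrite mcoeffZ mcoeffX.
have [hin|hnin] := boolP (mu \in msupp p).
  rewrite (bigD1_seq mu) //= ?msupp_uniq // eqxx mulr1 big1 ?addr0 //.
  by move=> m /negbTE ->; rewrite mulr0.
rewrite (memN_msupp_eq0 hnin) mul0r big_seq big1 // => m hm.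
have -> : (m == mu) = false by apply/eqP => e; move: hnin; rewrite -e hm.
by rewrite mulr0.
Qed.

Lemma wt4 s t m : wt s t m = s ^+ (m v0 + m v1) * t ^+ (m v2 + m v3).
Proof.
rewrite /wt !big_ord_recl big_ord0 /= mulr1 !exprD !mulrA.
by congr (_ ^+ m _ * _ ^+ m _ * _ ^+ m _ * _ ^+ m _); apply: val_inj.
Qed.


Lemma sc_bihom s t p d1 d2 :
  (forall m, m \in msupp p -> (m v0 + m v1 = d1)%N /\ (m v2 + m v3 = d2)%N) ->
  sc s t p = (s ^+ d1 * t ^+ d2) *: p.
Proof.
move=> hp; apply/mpolyP => mu; rewrite sc_coef mcoeffZ.
have [hin|hnin] := boolP (mu \in msupp p).
  by have [e1 e2] := hp _ hin; rewrite wt4 e1 e2 mulrC.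
by rewrite (memN_msupp_eq0 hnin) mul0r mulr0.
Qed.

Lemma scM s t p q : sc s t (p * q) = sc s t p * sc s t q.
Proof. exact: cmpM. Qed.
Lemma scZ s t c p : sc s t (c *: p) = c *: sc s t p.
Proof. exact: cmpZ. Qed.
Lemma sc_sum s t (I : Type) (r : seq I) (P : pred I) (F : I -> M) :
  sc s t (\sum_(i <- r | P i) F i) = \sum_(i <- r | P i) sc s t (F i).
Proof. exact: cmp_sum. Qed.
Lemma sc1 s t : sc s t 1 = 1.
Proof. exact: cmp1. Qed.

Lemma scX0 s t : sc s t 'X_v0 = s *: 'X_v0. Proof. by rewrite /sc cmpXU. Qed.
Lemma scX1 s t : sc s t 'X_v1 = s *: 'X_v1. Proof. by rewrite /sc cmpXU. Qed.
Lemma scX2 s t : sc s t 'X_v2 = t *: 'X_v2. Proof. by rewrite /sc cmpXU. Qed.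
Lemma scX3 s t : sc s t 'X_v3 = t *: 'X_v3. Proof. by rewrite /sc cmpXU. Qed.

Definition Lx (Q : point R) : M := Q.1.2 *: 'X_v0 - Q.1.1 *: 'X_v1.
Definition Ly (Q : point R) : M := Q.2.2 *: 'X_v2 - Q.2.1 *: 'X_v3.

Lemma pg0 Q : point_gens Q ord0 = Lx Q. Proof. by rewrite /point_gens eqxx. Qed.
Lemma pg1 Q : point_gens Q (lift ord0 ord0) = Ly Q. Proof. by []. Qed.

Lemma scLx s t Q : sc s t (Lx Q) = s *: Lx Q.
Proof.
rewrite /Lx /sc cmpB !cmpZ -!/(sc s t _) scX0 scX1.
by rewrite scalerBr !scalerA (mulrC s) (mulrC s).
Qed.

Lemma scLy s t Q : sc s t (Ly Q) = t *: Ly Q.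
Proof.
rewrite /Ly /sc cmpB !cmpZ -!/(sc s t _) scX2 scX3.
by rewrite scalerBr !scalerA (mulrC t) (mulrC t).
Qed.


Definition Lxa (a : C * C) : M := a.2 *: 'X_v0 - a.1 *: 'X_v1.

Definition tau (a : C * C) : 'I_4 -> M := fun i =>
  match val i with
  | 0 => if a.1 == 0 then 0 else 'X_v0
  | 1 => if a.1 == 0 then 'X_v1 else (a.2 / a.1) *: 'X_v0
  | _ => 'X_i end.

Lemma tauLx a : cmp (tau a) (Lxa a) = 0.
Proof.
case: a => x y; rewrite /Lxa cmpB !cmpZ !cmpXU /tau /=.
have [->|hx] := eqP; first by rewrite scaler0 scale0r subrr.
by rewrite scalerA mulrCA mulfV ?mulr1 ?subrr //; apply/eqP.
Qed.

Lemma MC_scale (c : C) (p : M) : p * c%:MP = c *: p.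
Proof. by rewrite mulrC mul_mpolyC. Qed.

Lemma FT a : a != (0, 0) -> forall p, cmp (tau a) p = 0 -> dv (Lxa a) p.
Proof.
case: a => x y ha.
have hc : forall i, cong (Lxa (x, y)) (tau (x, y) i) 'X_i.
  case=> [[|[|k]] hi] /=.
  - have -> : Ordinal hi = v0 by apply: val_inj.
    rewrite /tau /=; have [hx|hx] := eqP; last exact: cong_refl.
    have hy : y != 0 by apply: contraNneq ha => ->; rewrite hx.
    exists (- y^-1)%:MP; rewrite MC_scale /Lxa /= hx scale0r subr0 scalerA.
    by rewrite mulNr mulVf // scaleN1r sub0r.
  - have -> : Ordinal hi = v1 by apply: val_inj.
    rewrite /tau /=; have [hx|hx] := eqP; first exact: cong_refl.
    have hx' : x != 0 by apply/eqP.
    exists (x^-1)%:MP; rewrite MC_scale /Lxa /= scalerBr !scalerA mulVf //.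
    by rewrite scale1r mulrC.
  - by rewrite /tau /=; exists 0; rewrite subrr mulr0.
move=> p hp; have [q e] := cong_cmp hc p.
by exists (- q); rewrite mulrN -e hp sub0r opprK.
Qed.


Lemma scLxa s t a : sc s t (Lxa a) = s *: Lxa a.
Proof. exact: (scLx s t (a, (0, 0))). Qed.

Lemma Lxa_neq0 a : a != (0, 0) -> Lxa a != 0.
Proof.
case: a => x y ha; apply/eqP => h.
have h0 := congr1 (mcoeff U_(v0)) h; have h1 := congr1 (mcoeff U_(v1)) h.
move: h0 h1; rewrite /Lxa /= !mcoeffB !mcoeffZ !mcoeffXU /= !mcoeff0.
rewrite !mulr1 !mulr0 subr0 sub0r => hy /eqP; rewrite oppr_eq0 => /eqP hx.
by move: ha; rewrite hx hy eqxx.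
Qed.

Fixpoint FX (X : seq (point R)) : M :=
  match X with
  | [::] => 1
  | Q :: X' => if cmp (tau Q.1) (FX X') == 0 then FX X' else Lxa Q.1 * FX X'
  end.

Lemma FX_props X : (forall Q, Q \in X -> valid_point Q) ->
  [/\ FX X != 0, (forall Q, Q \in X -> cmp (tau Q.1) (FX X) = 0),
      (forall h, (forall Q, Q \in X -> cmp (tau Q.1) h = 0) -> dv (FX X) h),
      (exists m, forall s, sc s s (FX X) = s ^+ m *: FX X) & sc 1 0 (FX X) = FX X].
Proof.
elim: X => [|Q X IH] hv /=.
  split; [exact: oner_neq0 | by [] | | |].
  - by move=> h _; exists h; rewrite mul1r.
  - by exists 0%N => s; rewrite /sc cmp1 scale1r.
  - by rewrite /sc cmp1.
have hv' : forall P, P \in X -> valid_point P.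
  by move=> P hP; apply: hv; rewrite inE hP orbT.
have [hvQ _] := hv Q (mem_head _ _).
have [nz van dvd [m hm] phi] := IH hv'.
case: ifP => /eqP b.
  split.
  - exact: nz.
  - by move=> P; rewrite inE => /orP [/eqP -> //|]; apply: van.
  - by move=> h hh; apply: dvd => P hP; apply: hh; rewrite inE hP orbT.
  - by exists m.
  - exact: phi.
split.
- by rewrite mulf_neq0 ?Lxa_neq0.
- move=> P; rewrite inE => /orP [/eqP ->|hP]; rewrite cmpM.
    by rewrite tauLx mul0r.
  by rewrite van // mulr0.
- move=> h hh; have [u hu] : dv (FX X) h.
    by apply: dvd => P hP; apply: hh; rewrite inE hP orbT.
 
  have : cmp (tau Q.1) u = 0.
    have := hh Q (mem_head _ _); rewrite hu cmpM => /eqP.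
    rewrite mulf_eq0 => /orP [/eqP b'|/eqP b']; [by case: b | exact: b'].
  move=> /(FT hvQ) [q hq]; exists q.
  by rewrite hu hq mulrCA mulrA.
- exists m.+1 => s; rewrite scM scLxa hm.
  by rewrite -scalerAl -scalerAr scalerA exprS.
- by rewrite scM scLxa phi scale1r.
Qed.


Local Notation phi := (sc 1 0).

Lemma gen_phi (I : finType) (P : pred I) (g : I -> M) p :
  gen_ideal P g p -> exists c : I -> M,
    phi p = \sum_(i | P i) phi (c i) * phi (g i).
Proof.
move=> [c ->]; exists c; rewrite sc_sum; apply: eq_bigr => i _; exact: scM.
Qed.

Lemma exists_pure (I : finType) (P : pred I) (g : I -> M) p :
  gen_ideal P g p -> phi p = p -> p != 0 -> exists i, P i /\ phi (g i) != 0.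
Proof.
move=> /gen_phi [c hc] hp hnz.
case: (boolP [exists i, P i && (phi (g i) != 0)]) => [/existsP [i /andP [h1 h2]]|/existsPn hall].
  by exists i.
move/eqP: hnz; case; rewrite -hp hc big1 // => i Pi.
by have := hall i; rewrite Pi /= negbK => /eqP ->; rewrite mulr0.
Qed.

Lemma in_point_ideal Q p q : p = Lxa Q.1 * q -> point_ideal Q p.
Proof.
move=> ->; exists (fun i => if i == ord0 then q else 0).
rewrite (bigD1 ord0) //= pg0 big1 ?addr0; first by rewrite mulrC.
by move=> i /negbTE ->; rewrite mul0r.
Qed.

Lemma FX_in X : (forall Q, Q \in X -> valid_point Q) -> points_ideal X (FX X).
Proof.
move=> hv Q hQ; have [_ van _ _ _] := FX_props hv.
have [hvQ _] := hv Q hQ.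
by have [q hq] := FT hvQ (van Q hQ); apply: (in_point_ideal hq).
Qed.

Lemma pure_tau Q h : phi h = h -> point_ideal Q h -> cmp (tau Q.1) h = 0.
Proof.
move=> hp [c hc]; rewrite -hp hc sc_sum cmp_sum.
rewrite big1 // => i _; rewrite scM cmpM.
have [->|hi] := eqVneq i ord0.
  by rewrite pg0 scLx scale1r tauLx !mulr0.
by rewrite /point_gens (negbTE hi) -/(Ly Q) scLy scale0r cmp0 !mulr0.
Qed.

Lemma gen_self (r : nat) (g : 'I_r -> M) k : gen_ideal predT g (g k).
Proof.
exists (fun j => (j == k)%:R); rewrite (bigD1 k) //= eqxx mul1r big1 ?addr0 //.
by move=> j /negbTE ->; rewrite mul0r.
Qed.


Lemma mnm4 (mu : 'X_{1..4}) : (mu v0 + mu v1 + (mu v2 + mu v3) = 0)%N -> mu = 0%MM.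
Proof.
move/eqP; rewrite !addn_eq0 => /andP [/andP [/eqP h0 /eqP h1] /andP [/eqP h2 /eqP h3]].
apply/mnmP => -[[|[|[|[|k]]]] hi]; rewrite mnm0E.
- by rewrite (_ : Ordinal hi = v0) //; apply: val_inj.
- by rewrite (_ : Ordinal hi = v1) //; apply: val_inj.
- by rewrite (_ : Ordinal hi = v2) //; apply: val_inj.
- by rewrite (_ : Ordinal hi = v3) //; apply: val_inj.
- by [].
Qed.

Lemma sc00 p : sc 0 0 p = (p@_0%MM)%:MP.
Proof.
apply/mpolyP => mu; rewrite sc_coef mcoeffC wt4.
have [->|hmu] := eqVneq mu 0%MM; first by rewrite !mnm0E !expr0 !mulr1.
rewrite mulr0.
case ha: (mu v0 + mu v1)%N => [|k1]; last by rewrite exprS !mul0r mulr0.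
case hb: (mu v2 + mu v3)%N => [|k2]; last by rewrite exprS !mul0r !mulr0.
have := @mnm4 mu; rewrite ha hb => /(_ erefl) hm; by move: hmu; rewrite hm eqxx.
Qed.

Lemma two_pow_inj (m d : nat) : (2 : C) ^+ m = 2 ^+ d -> m = d.
Proof.
by rewrite -!natrX => /eqP; rewrite eqr_nat eqn_exp2l // => /eqP.
Qed.

Lemma two_pow_eq1 (m : nat) : (2 : C) ^+ m = 1 -> m = 0%N.
Proof. by rewrite -(expr0 (2 : C)) => /two_pow_inj. Qed.

Lemma const_of (a : M) (m d : nat) :
  (forall s : C, s ^+ m *: sc s s a = s ^+ d *: a) -> a@_0%MM != 0 -> a = (a@_0%MM)%:MP.
Proof.
move=> H ha.
have h2 mu : 2 ^+ m * (a@_mu * 2 ^+ (mu v0 + mu v1 + (mu v2 + mu v3))) = 2 ^+ d * a@_mu.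
  by have := congr1 (mcoeff mu) (H 2); rewrite !mcoeffZ sc_coef wt4 -exprD.
have emd : m = d.
  have := h2 0%MM; rewrite !mnm0E expr0 mulr1 => /(mulIf ha) /two_pow_inj.
  by [].
apply/mpolyP => mu; rewrite mcoeffC.
have [->|hmu] := eqVneq mu 0%MM; first by rewrite mulr1.
rewrite mulr0; have := h2 mu; rewrite -emd => /(mulfI _) e.
have n2 : (2 : C) ^+ m != 0 by rewrite expf_neq0 // pnatr_eq0.
move: (e n2) => /eqP; rewrite -subr_eq0 -{2}[a@_mu]mulr1 -mulrBr mulf_eq0 subr_eq0.
case/orP => [/eqP //|/eqP /two_pow_eq1 /mnm4 hm].
by move: hmu; rewrite hm eqxx.
Qed.

Lemma bih_phi p : bihomogeneous p ->
  (exists d, forall s, sc s s (phi p) = s ^+ d *: phi p) /\ (phi p != 0 -> phi p = p).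
Proof.
move=> [d1 [d2 hp]]; have e := sc_bihom 1 0 hp.
split.
  exists (d1 + d2)%N => s; rewrite e scZ (sc_bihom s s hp) !scalerA.
  by rewrite exprD mulrC.
rewrite e; case: d2 {hp e} => [|k]; first by rewrite expr0 expr1n mulr1 scale1r.
by rewrite expr0n /= mulr0 scale0r eqxx.
Qed.

End S.

Local Notation phi := (sc 1 0).

Theorem lemma3p1 (R : realType) (X : seq (point R)) (r : nat) (g : 'I_r -> Cpoly R) :
  (forall P, P \in X -> valid_point P) ->
  X != [::] ->
  minimal_bihom_gens g (points_ideal X) ->
  ~ exists S : {set 'I_r},
      [/\ S != set0, S != setT,
          is_points_ideal (gen_ideal (fun i => i \in S) g)
        & is_points_ideal (gen_ideal (fun i => i \notin S) g)].
Proof.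
move=> hv _ [hbih [hgen hmin]] [S [hS0 hST [Y [hY eJ]] [Z [hZ eK]]]].
have [i [iS phii]] : exists i, i \in S /\ phi (g i) != 0.
  apply: (exists_pure (P := fun i => i \in S)) (FX Y) _ _ _.
  - by apply/eJ; apply: FX_in.
  - by have [_ _ _ _ ->] := FX_props hY.
  - by have [-> _ _ _ _] := FX_props hY.
have [j [jS phij]] : exists j, j \notin S /\ phi (g j) != 0.
  apply: (exists_pure (P := fun i => i \notin S)) (FX Z) _ _ _.
  - by apply/eK; apply: FX_in.
  - by have [_ _ _ _ ->] := FX_props hZ.
  - by have [-> _ _ _ _] := FX_props hZ.
have [Fnz Fvan Fdvd [m Fm] Fphi] := FX_props hv.
have hFI : gen_ideal predT g (FX X) by apply/hgen; apply: FX_in.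
have hq : forall k, exists a, phi (g k) = FX X * a.
  move=> k; have [_ hk] := bih_phi (hbih k).
  have [->|nz] := eqVneq (phi (g k)) 0; first by exists 0; rewrite mulr0.
  rewrite (hk nz); apply: Fdvd => Q hQ; apply: pure_tau; first exact: hk nz.
  by have := (hgen (g k)).1 (gen_self g k); apply.
have [a ha] := fin_all_exists hq.
have [c hc] := gen_phi hFI.
have e1 : FX X * (1 - \sum_k phi (c k) * a k) = 0.
  rewrite mulrBr mulr1 mulr_sumr -{1}Fphi hc; apply/eqP; rewrite subr_eq0; apply/eqP.
  by apply: eq_bigr => k _; rewrite ha mulrCA.
have e2 : \sum_k phi (c k) * a k = 1.
  by move: e1 => /eqP; rewrite mulf_eq0 (negbTE Fnz) /= subr_eq0 => /eqP <-.
have [k hk] : exists k, (a k)@_0%MM != 0.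
  case: (boolP [exists k, (a k)@_0%MM != 0]) => [/existsP //|/existsPn hall].
  have := congr1 (sc 0 0) e2; rewrite sc_sum sc1 big1 => [|k0 _]; last first.
    by rewrite scM (sc00 (a k0)); move: (hall k0); rewrite negbK => /eqP ->; rewrite mulr0.
  by move=> /eqP; rewrite eq_sym oner_eq0.
have ak : a k = ((a k)@_0%MM)%:MP.
  have [[d hd] _] := bih_phi (hbih k).
  apply: (@const_of _ _ m d) hk => s.
  apply: (mulfI Fnz).
  by rewrite -!scalerAr scalerAl -Fm -scM -ha hd ha.
set lam := (a k)@_0%MM.
have gk : phi (g k) = FX X * lam%:MP by rewrite ha {1}ak.
have phik : phi (g k) != 0 by rewrite gk mulf_neq0 // mpolyC_eq0.
have gkf : phi (g k) = g k := (bih_phi (hbih k)).2 phik.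
have [l [hl phil]] : exists l, l != k /\ phi (g l) != 0.
  have hij : i != j by apply: contraNneq jS => <-.
  have [eik|nik] := eqVneq i k; last by exists i.
  by exists j; split => //; rewrite -eik eq_sym.
have glf := (bih_phi (hbih l)).2 phil.
apply: (hmin l); exists (fun j0 => if j0 == k then lam^-1%:MP * a l else 0).
rewrite (bigD1 k) /=; last by rewrite eq_sym.
case: ifP => [_|/negbT /eqP //].
rewrite big1 ?addr0 => [|j0 /andP [_ /negbTE ->]]; last by rewrite mul0r.
rewrite -glf ha -gkf gk (mulrC (FX X) lam%:MP) !mul_mpolyC -scalerAr -scalerAl scalerA.
by rewrite mulfV // scale1r mulrC.
Qed.
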